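(* The only novel partition of length $4$ is $(1,1,1,1)$.
   Context: An integer partition is $\lambda=(\lambda_1,\dots,\lambda_k)$ with integers $\lambda_1\ge\dots\ge\lambda_k\ge 1$; $k$ is its length. For $v\in\mathbb{Z}^k$ let $v^{\perp B}=\{x\in\{-1,1\}^k: v\cdot x=0\}$; $\lambda^{\perp B}$ is this set for $(\lambda_1,\dots,\lambda_k)$. $V_\lambda\subset\mathbb{Z}^k$ is the set of vectors obtained from $(\lambda_1,\dots,\lambda_k)$ by permuting coordinates and changing signs of some coordinates, with first coordinate positive. For $I\subset\{1,\dots,m\}$, $\mathrm{Proj}_I:\{-1,1\}^m\to\{-1,1\}^{|I|}$ keeps the coordinates indexed by $I$. Reduction: for partitions $\mu$ of length $m$ and $\lambda$ of length $k\le m$, $\mu\Rightarrow\lambda$ iff there exist $I\subset\{1,\dots,m\}$, $|I|=k$, and $v\in V_\lambda$ with $\mathrm{Proj}_I(\mu^{\perp B})\subset v^{\perp B}$. $\mu$ strictly reduces to $\lambda$ iff $\mu\Rightarrow\lambda$ and not $\lambda\Rightarrow\mu$. Partitions $\lambda,\mu$ of the same length are equivalent iff there is $w\in V_\mu$ with $\lambda^{\perp B}=w^{\perp B}$. A partition $\lambda$ is novel iff $\lambda^{\perp B}\neq\emptyset$, $\lambda$ strictly reduces to no partition, and $\lambda$ is lexicographically smallest among partitions equivalent to it. *)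

(* Defs.v *)
From HB Require Import structures.
From mathcomp Require Import all_boot all_order all_algebra.
Set Implicit Arguments. Unset Strict Implicit. Unset Printing Implicit Defensive.
Import Order.TTheory GRing.Theory Num.Theory.
Local Open Scope ring_scope.

Definition is_partition (l : seq nat) : bool :=
  [&& (0 < size l)%N, sorted geq l & all (fun a => (0 < a)%N) l].

Definition pm1 (a : int) : bool := (a == 1) || (a == -1).

Definition dotz (v x : seq int) : int := \sum_(p <- zip v x) p.1 * p.2.

Definition perpB (v : seq int) (x : seq int) : bool :=
  [&& size x == size v, all pm1 x & dotz v x == 0].

Definition intvec (l : seq nat) : seq int := map Posz l.

Definition inV (lam : seq nat) (v : seq int) : Prop :=
  exists (p : seq nat) (e : seq int),
    [/\ perm_eq p lam, size e = size lam, all pm1 e,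
        v = [seq q.1 * Posz q.2 | q <- zip e p] & 0 < head 0 v].

(* mu => lam ; the index set I is encoded as a bitmask b of size m,
   Proj_I x = mask b x (coordinates in I, in increasing order) *)
Definition reduces (mu lam : seq nat) : Prop :=
  (size lam <= size mu)%N /\
  exists b : bitseq,
    [/\ size b = size mu, count id b = size lam &
        exists v, inV lam v /\
          forall x, perpB (intvec mu) x -> perpB v (mask b x)].

Definition strictly_reduces (mu lam : seq nat) : Prop :=
  reduces mu lam /\ ~ reduces lam mu.

Definition equivalent (lam mu : seq nat) : Prop :=
  size lam = size mu /\
  exists w, inV mu w /\ forall x, perpB (intvec lam) x = perpB w x.

Fixpoint lex_le (s t : seq nat) : bool :=
  match s, t with
  | [::], _ => true
  | _ :: _, [::] => false
  | a :: s', b :: t' => (a < b)%N || ((a == b) && lex_le s' t')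
  end.

Definition novel (lam : seq nat) : Prop :=
  [/\ is_partition lam,
      exists x, perpB (intvec lam) x,
      forall nu, is_partition nu -> ~ strictly_reduces lam nu &
      forall mu, is_partition mu -> equivalent mu lam -> lex_le lam mu].

(* Main.v *)
Require Import Defs.
From mathcomp Require Import all_boot.
From mathcomp Require Import all_boot all_order all_algebra zify.
Import Order.TTheory GRing.Theory Num.Theory.

Fixpoint dot' (v x : seq int) : int :=
  match v, x with a :: v', b :: x' => (a * b + dot' v' x')%R | _, _ => 0%R end.

Lemma dotzE v x : dotz v x = dot' v x.
Proof.
elim: v x => [|a v IH] [|b x] //=; rewrite /dotz ?big_nil //= big_cons -IH //.
Qed.

Lemma pm1P a : pm1 a -> (a = 1 \/ a = -1)%R.
Proof. by case/orP => /eqP; auto. Qed.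

Lemma perp4 (a b c d : int) x : perpB [:: a; b; c; d] x ->
  exists x1 x2 x3 x4, x = [:: x1; x2; x3; x4] /\
   [/\ (x1 = 1 \/ x1 = -1)%R, (x2 = 1 \/ x2 = -1)%R, (x3 = 1 \/ x3 = -1)%R,
       (x4 = 1 \/ x4 = -1)%R &
       (a * x1 + (b * x2 + (c * x3 + (d * x4 + 0))) = 0)%R].
Proof.
case: x => [|x1 [|x2 [|x3 [|x4 [|x5 x]]]]] //.
rewrite /perpB dotzE /= => /andP [/and5P [/pm1P h1 /pm1P h2 /pm1P h3 /pm1P h4 _] /eqP E].
by exists x1, x2, x3, x4.
Qed.

Lemma pair_lem (a b c d : nat) (x1 x2 x3 x4 : int) :
  (d <= c)%N -> (c <= b)%N -> (b <= a)%N -> (0 < d)%N -> a != d ->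
  (x1 = 1 \/ x1 = -1)%R -> (x2 = 1 \/ x2 = -1)%R -> (x3 = 1 \/ x3 = -1)%R ->
  (x4 = 1 \/ x4 = -1)%R ->
  (Posz a * x1 + (Posz b * x2 + (Posz c * x3 + (Posz d * x4 + 0))) = 0)%R ->
  (x1 + x2 = 0)%R.
Proof.
move=> h1 h2 h3 h4 /eqP h5 [->|->] [->|->] [->|->] [->|->] E; lia.
Qed.

Lemma map_nz (e : seq int) (p : seq nat) : all pm1 e -> all (fun a => 0 < a)%N p ->
  all (fun z => z != 0%R) [seq (q.1 * Posz q.2)%R | q <- zip e p].
Proof.
elim: e p => [|a e IH] [|n p] //= /andP [/pm1P ha he] /andP [hn hp].
rewrite IH // andbT; case: ha => ->; apply/eqP; lia.
Qed.

Lemma inV_props nu v : inV nu v -> all (fun a => 0 < a)%N nu ->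
  [/\ size v = size nu, all (fun z => z != 0%R) v & (0 < head 0 v)%R].
Proof.
case=> p [e [pp se ae -> hv]] pos; split => //.
  by rewrite size_map size_zip se (perm_size pp) minnn.
by apply: map_nz => //; rewrite (perm_all _ pp).
Qed.

Lemma red_analysis v (b : bitseq) :
  size b = 4 -> size v = count id b -> all (fun z => z != 0%R) v -> (0 < head 0 v)%R ->
  (forall x, perpB (intvec [:: 1; 1; 1; 1]%N) x -> perpB v (mask b x)) ->
  exists c, v = [:: c; c; c; c].
Proof.
move=> sb sv nz hv H.
have H1 := H [:: 1; 1; -1; -1]%R; rewrite {1}/perpB dotzE /= in H1; move: {H1}(H1 isT) => H1.
have H2 := H [:: 1; -1; 1; -1]%R; rewrite {1}/perpB dotzE /= in H2; move: {H2}(H2 isT) => H2.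
have H3 := H [:: 1; -1; -1; 1]%R; rewrite {1}/perpB dotzE /= in H3; move: {H3}(H3 isT) => H3.
have H4 := H [:: -1; -1; 1; 1]%R; rewrite {1}/perpB dotzE /= in H4; move: {H4}(H4 isT) => H4.
have H5 := H [:: -1; 1; -1; 1]%R; rewrite {1}/perpB dotzE /= in H5; move: {H5}(H5 isT) => H5.
have H6 := H [:: -1; 1; 1; -1]%R; rewrite {1}/perpB dotzE /= in H6; move: {H6}(H6 isT) => H6.
clear H.
move: H1 H2 H3 H4 H5 H6 sv nz hv.
case: b sb => [|b1 [|b2 [|b3 [|b4 [|? ?]]]]] //= _.
case: b1; case: b2; case: b3; case: b4;
case: v => [|v1 [|v2 [|v3 [|v4 [|v5 v]]]]] //=;
rewrite /perpB ?dotzE /= => /eqP H1 /eqP H2 /eqP H3 /eqP H4 /eqP H5 /eqP H6 _;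
rewrite ?andbT => nz hv.
all: try (exfalso; lia).
exists v1; have e2 : v2 = v1 by lia.
have e3 : v3 = v1 by lia. have e4 : v4 = v1 by lia. by rewrite e2 e3 e4.
Qed.

Lemma inV_const nu c : inV nu [:: c; c; c; c] -> all (fun a => 0 < a)%N nu ->
  exists n, nu = [:: n; n; n; n] /\ (0 < n)%N.
Proof.
case=> p [e [pp se ae ev hv]] pos.
have pp' := perm_size pp.
have pposp : all (fun a => 0 < a)%N p by rewrite (perm_all _ pp).
move: ev pposp ae se pp' pp.
case: e => [|e1 [|e2 [|e3 [|e4 [|e5 e]]]]]; case: p => [|p1 [|p2 [|p3 [|p4 [|p5 p]]]]] //=;
  try (by move=> ?; discriminate); try (move=> _ _ _ A B _; exfalso; lia).
move=> [E1 E2 E3 E4] /and5P [q1 q2 q3 q4 _] /and5P [/pm1P h1 /pm1P h2 /pm1P h3 /pm1P h4 _] se sp pp.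
have hc : (0 < c)%R := hv.
have [f2 [f3 f4]] : p2 = p1 /\ p3 = p1 /\ p4 = p1.
  case: h1 => ?; case: h2 => ?; case: h3 => ?; case: h4 => ?; subst; lia.
subst p2 p3 p4.
exists p1; split; last by [].
have m : forall z, z \in nu -> z = p1.
    by move=> z; rewrite -(perm_mem pp) !inE => /or4P [] /eqP.
move: m; case: nu se {sp pp pos} => [|n1 [|n2 [|n3 [|n4 [|n5 nu]]]]] // _ m.
have -> : n1 = p1 by apply: m; rewrite inE eqxx.
have -> : n2 = p1 by apply: m; rewrite !inE eqxx orbT.
have -> : n3 = p1 by apply: m; rewrite !inE eqxx !orbT.
have -> : n4 = p1 by apply: m; rewrite !inE eqxx !orbT.
by [].
Qed.

Lemma red_const n : (0 < n)%N -> reduces [:: n; n; n; n] [:: 1; 1; 1; 1]%N.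
Proof.
move=> n0; split => //; exists [:: true; true; true; true]; split => //.
exists [:: 1; 1; 1; 1]%R; split.
  by exists [:: 1; 1; 1; 1]%N, [:: 1; 1; 1; 1]%R.
move=> x /perp4 [x1 [x2 [x3 [x4 [-> [h1 h2 h3 h4 E]]]]]].
rewrite /perpB dotzE /=.
case: h1 E => ->; case: h2 => ->; case: h3 => ->; case: h4 => -> => E //=; exfalso; lia.
Qed.

Lemma lex_ones s : all (fun a => 0 < a)%N s -> lex_le (nseq (size s) 1%N) s.
Proof.
elim: s => //= m s IH /andP [hm hs]; case: m hm => [|[|m]] //= _; exact: IH.
Qed.

Theorem mainTheorem8 (lam : seq nat) :
  is_partition lam -> size lam = 4 -> (novel lam <-> lam = [:: 1; 1; 1; 1]).
Proof.
move=> pl sl; split.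
- case=> _ [x px] nored lexm.
  case: lam pl sl px nored lexm => [|a [|b [|c [|d [|? ?]]]]] // pl _ px nored lexm.
  move: pl => /and3P [_ /= srt pos].
  move: srt pos => /and3P [hab hbc /andP [hcd _]] /and5P [ha hb hc hd _].
  have [ad|ad] := eqVneq a d.
  + subst d.
    have eb : b = a by lia.
    have ec : c = a by lia.
    subst b c.
    have := lexm [:: 1; 1; 1; 1]%N isT.
    have eq : equivalent [:: 1; 1; 1; 1]%N [:: a; a; a; a].
      split => //; exists (intvec [:: a; a; a; a]); split.
        exists [:: a; a; a; a], [:: 1; 1; 1; 1]%R; split => //=.
          by rewrite !mul1r.
      move=> y; case: y => [|x1 [|x2 [|x3 [|x4 [|x5 y]]]]]; rewrite /perpB ?dotzE /= //.
      rewrite !addr0 !mul1r -!mulrDr mulf_eq0.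
      have -> : (Posz a == 0%R) = false by apply/eqP; lia.
      by [].
    move=> /(_ eq) /=.
    by case: a ha {hb hc hd hab hbc hcd px nored lexm eq} => [|[|a]].
  + exfalso; apply: (nored [:: 1; 1]%N isT); split; last by case.
    split => //; exists [:: true; true; false; false]; split => //.
    exists [:: 1; 1]%R; split.
      by exists [:: 1; 1]%N, [:: 1; 1]%R.
    move=> y /perp4 [y1 [y2 [y3 [y4 [-> [h1 h2 h3 h4 E]]]]]].
    have := @pair_lem a b c d y1 y2 y3 y4 hcd hbc hab hd ad h1 h2 h3 h4 E.
    rewrite /perpB dotzE /=.
    by case: h1 => ->; case: h2 => -> //= E'; exfalso; lia.
- move=> ->; split => //.
  + by exists [:: 1; -1; 1; -1]%R; rewrite /perpB dotzE.
  + move=> nu pnu [red nred]; apply: nred.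
    case: red => _ [b [sb cb [v [iv H]]]].
    move: pnu => /and3P [_ _ pos].
    have [sv nz hv] := @inV_props nu v iv pos.
    have sv' : size v = count id b by rewrite sv cb.
    have [cc E] := @red_analysis v b sb sv' nz hv H.
    rewrite E in iv.
    have [n [-> n0]] := @inV_const nu cc iv pos.
    exact: red_const n0.
  + move=> mu pmu [smu _].
    move: pmu => /and3P [_ _ pos].
    have := @lex_ones mu pos; by rewrite smu.
Qed.
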